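(* Let $\tilde R\le0$ and let the intervention set $\mathcal I$ be partial; write $\tilde V^*(d_0)=\sup_\pi\tilde V^\pi(d_0)$. (1) For any policy $\pi$, $\tilde V^*(d_0)\ge\tilde J^\pi_+$, where $\tilde J^\pi_+=\frac1{1-\gamma}\mathbb E_{(s,a)\sim\tilde d^\pi}[r(s,a)\mathbb 1\{(s,a)\in(\mathcal S_{\mathrm{safe}}\times\mathcal A)\setminus\mathcal I\}]$. (2) If $\tilde{\mathcal M}$ admits an optimal policy, then it admits an optimal policy $\tilde\pi^*$ with $\mathbb E_{(s,a)\sim\tilde d^{\tilde\pi^*}}[\mathbb 1\{(s,a)\in\mathcal I\}]=0$. (3) If $\tilde R<0$, every optimal policy $\tilde\pi^*$ of $\tilde{\mathcal M}$ satisfies $\mathbb E_{(s,a)\sim\tilde d^{\tilde\pi^*}}[\mathbb 1\{(s,a)\in\mathcal I\}]=0$.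
   Context: $\mathcal M=(\mathcal S,\mathcal A,P,r,\gamma)$ is a discounted MDP with discrete state and action spaces, reward $r(s,a)\in[0,1]$, discount $\gamma\in[0,1)$, initial distribution $d_0$. $\mathcal S$ contains two distinguished states $s_\triangleright,s_\circ$ forming $\mathcal S_{\mathrm{unsafe}}$; $\mathcal S_{\mathrm{safe}}=\mathcal S\setminus\mathcal S_{\mathrm{unsafe}}$; from $s_\triangleright$ every action leads to $s_\circ$, $s_\circ$ is absorbing, $r=0$ on $\mathcal S_{\mathrm{unsafe}}$. Policies are stationary. An intervention rule $\mathcal G=(\bar Q,\mu,\eta)$ (backup policy $\mu$, $\eta\in[0,1]$, $\bar Q:\mathcal S_{\mathrm{safe}}\times\mathcal A\to[0,1]$) has intervention set $\mathcal I=\{(s,a)\in\mathcal S_{\mathrm{safe}}\times\mathcal A:\bar Q(s,a)-\mathbb E_{a'\sim\mu(\cdot|s)}\bar Q(s,a')>\eta\}$; a set $\mathcal X\subseteq\mathcal S_{\mathrm{safe}}\times\mathcal A$ is partial if for every $(s,a)\in\mathcal X$ there is $a'$ with $(s,a')\notin\mathcal X$. The absorbing MDP $\tilde{\mathcal M}=(\mathcal S\cup\{s_\dagger\},\mathcal A,\tilde P,\tilde r,\gamma)$ has $\tilde r(s,a)=\tilde R$ if $(s,a)\in\mathcal I$, $\tilde r(s_\dagger,a)=0$, $\tilde r=r$ otherwise; $\tilde P(\cdot|s,a)$ is the point mass at $s_\dagger$ if $(s,a)\in\mathcal I$ or $s=s_\dagger$, else $P(\cdot|s,a)$. Policies are extended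 to $s_\dagger$ arbitrarily. $\tilde V^\pi(d_0)$ is the value of $\pi$ in $\tilde{\mathcal M}$ from $s_0\sim d_0$, $\tilde d^\pi(s,a)=(1-\gamma)\sum_t\gamma^t\Pr(s_t=s,a_t=a)$ in $\tilde{\mathcal M}$; a policy is optimal if it attains $\tilde V^*(d_0)$. *)

(* Defs.v *)
(* Discrete (possibly infinite) state/action spaces,
   sums over them via [esum] (nonnegative extended-real summation). *)
From HB Require Import structures.
From mathcomp Require Import all_boot all_order all_algebra.
From mathcomp Require Import all_classical all_reals.
From mathcomp Require Import ereal esum.
Set Implicit Arguments. Unset Strict Implicit. Unset Printing Implicit Defensive.
Import Order.TTheory GRing.Theory Num.Theory.
Local Open Scope classical_set_scope.
Local Open Scope ring_scope.

Section Defs.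
Variables (R : realType) (S A : choiceType).

Definition is_distr (T : choiceType) (p : T -> R) : Prop :=
  (forall x, 0 <= p x) /\ \esum_(x in [set: T]) (p x)%:E = 1%E.

Definition is_policy (pi : S -> A -> R) : Prop := forall s, is_distr (pi s).

Definition safe (s_tri s_circ s : S) : Prop := s <> s_tri /\ s <> s_circ.

Definition interv (s_tri s_circ : S) (Qbar : S -> A -> R) (mu : S -> A -> R)
  (eta : R) (s : S) (a : A) : Prop :=
  safe s_tri s_circ s /\
  (eta%:E < (Qbar s a)%:E - \esum_(a' in [set: A]) (mu s a' * Qbar s a')%:E)%E.

Definition partial_set (X : S -> A -> Prop) : Prop :=
  forall s a, X s a -> exists a', ~ X s a'.

(* Pr(s_t = s, a_t = a) in the absorbing MDP, for s in S (the extra absorbing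
   state s_dagger is never left once entered; entering happens exactly from
   pairs in I). *)
Fixpoint occ (I : S -> A -> Prop) (P : S -> A -> S -> R) (d0 : S -> R)
  (pi : S -> A -> R) (t : nat) (s : S) (a : A) : \bar R :=
  match t with
  | 0 => (d0 s * pi s a)%:E
  | t'.+1 =>
    ((\esum_(p in [set p : S * A | ~ I p.1 p.2])
        (occ I P d0 pi t' p.1 p.2 * (P p.1 p.2 s)%:E)) * (pi s a)%:E)%E
  end.

Definition dtil (I : S -> A -> Prop) (P : S -> A -> S -> R) (d0 : S -> R)
  (gamma : R) (pi : S -> A -> R) (s : S) (a : A) : \bar R :=
  ((1 - gamma)%:E * \esum_(t in [set: nat]) ((gamma ^+ t)%:E * occ I P d0 pi t s a))%E.

(* reward of the absorbing MDP on S x A (it is 0 at s_dagger) *)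
Definition rtil (I : S -> A -> Prop) (r : S -> A -> R) (Rt : R) (s : S) (a : A) : R :=
  if `[< I s a >] then Rt else r s a.

(* V~^pi(d0) = 1/(1-gamma) E_{d~^pi}[r~], the (absolutely convergent) signed
   sum being split into positive and negative parts. *)
Definition Vtil (I : S -> A -> Prop) (P : S -> A -> S -> R) (d0 : S -> R)
  (r : S -> A -> R) (Rt gamma : R) (pi : S -> A -> R) : \bar R :=
  ((1 - gamma)^-1%:E *
   (\esum_(p in [set: S * A])
       (dtil I P d0 gamma pi p.1 p.2 * (Num.max (rtil I r Rt p.1 p.2) 0)%:E)
    - \esum_(p in [set: S * A])
       (dtil I P d0 gamma pi p.1 p.2 * (Num.max (- rtil I r Rt p.1 p.2) 0)%:E)))%E.

Definition Vstar I P d0 r Rt gamma : \bar R :=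
  ereal_sup [set Vtil I P d0 r Rt gamma pi | pi in is_policy].

Definition optimal I P d0 r Rt gamma (pi : S -> A -> R) : Prop :=
  is_policy pi /\ Vtil I P d0 r Rt gamma pi = Vstar I P d0 r Rt gamma.

Definition Jplus (s_tri s_circ : S) I P d0 (r : S -> A -> R) gamma pi : \bar R :=
  ((1 - gamma)^-1%:E *
   \esum_(p in [set p : S * A | safe s_tri s_circ p.1 /\ ~ I p.1 p.2])
      (dtil I P d0 gamma pi p.1 p.2 * (r p.1 p.2)%:E))%E.

Definition interv_mass I P d0 gamma pi : \bar R :=
  \esum_(p in [set p : S * A | I p.1 p.2]) dtil I P d0 gamma pi p.1 p.2.

End Defs.

(* Main.v *)
Require Import Defs.
From HB Require Import structures.
From mathcomp Require Import all_boot all_order all_algebra.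
From mathcomp Require Import all_classical all_reals.
From mathcomp Require Import ereal esum.
From mathcomp Require Import topology normedtype sequences lra.
Import Order.TTheory GRing.Theory Num.Theory.
Local Open Scope classical_set_scope.
Local Open Scope ring_scope.

Section Gen.
Variable R : realType.
Local Open Scope ereal_scope.

Lemma esumZ_le (T : choiceType) (D : set T) (c : \bar R) (f : T -> \bar R) :
  0 <= c -> (forall x, 0 <= f x) ->
  \esum_(i in D) (c * f i) <= c * \esum_(i in D) f i.
Proof.
move=> c0 f0; apply: ge_ereal_sup => _ [X [finX XD] <-].
rewrite -ge0_mule_fsumr //; apply: lee_wpmul2l => //.
by apply: ereal_sup_ubound; exists X.
Qed.

Lemma esum_sub_le (T : choiceType) (D1 D2 : set T) (f : T -> \bar R) :
  D1 `<=` D2 -> (forall x, 0 <= f x) ->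
  \esum_(i in D1) f i <= \esum_(i in D2) f i.
Proof.
move=> sub f0; rewrite (esum_mkcond D1) (esum_mkcond D2); apply: le_esum => i _.
have [iD1|iD1] := boolP (i \in D1).
  by rewrite (mem_set (sub _ (set_mem iD1))).
by case: ifP.
Qed.

Lemma esum_swap (T1 T2 : choiceType) (D1 : set T1) (D2 : set T2)
  (f : T1 -> T2 -> \bar R) : (forall i j, 0 <= f i j) ->
  \esum_(i in D1) \esum_(j in D2) f i j = \esum_(j in D2) \esum_(i in D1) f i j.
Proof.
move=> f0; rewrite !esum_esum //.
rewrite (@reindex_esum R _ _ (D2 `*`` fun _ => D1) (D1 `*`` fun _ => D2)
  (fun k => (k.2, k.1)) (fun k => f k.1 k.2)) //.
split.
- by move=> [a b] /= [? ?]; split.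
- by move=> [a b] [c d] _ _ /= [-> ->].
- by move=> [a b] [? ?]; exists (b, a).
Qed.

Lemma esum_pairT (T1 T2 : choiceType) (f : T1 * T2 -> \bar R) :
  (forall x, 0 <= f x) ->
  \esum_(p in [set: T1 * T2]) f p =
  \esum_(i in [set: T1]) \esum_(j in [set: T2]) f (i, j).
Proof.
move=> f0; rewrite esum_esum //.
have -> : [set: T1] `*`` (fun _ => [set: T2]) = [set: T1 * T2].
  by apply/seteqP; split.
by apply: eq_esum => -[].
Qed.

Lemma esum_point (T : choiceType) (x0 : T) (m : \bar R) : 0 <= m ->
  \esum_(i in [set: T]) (if i == x0 then m else 0) = m.
Proof.
move=> m0.
rewrite -(eq_esum (I := [set: T]) (a := fun i => if i \in [set x0] then
   (if i == x0 then m else 0) else 0)); last first.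
  move=> i _; case: eqP => [->|ne]; first by rewrite mem_set.
  by rewrite ifF //; apply/negbTE/negP => /set_mem.

by rewrite -esum_mkcond esum_set1 ?eqxx.
Qed.

Lemma geo_esum (g : R) : (0 <= g < 1)%R ->
  ((1 - g)%R%:E * (\esum_(t in [set: nat]) (g ^+ t)%:E) <= 1)%E.
Proof.
move=> /andP[g0 g1].
have g1' : (0 < 1 - g)%R by rewrite subr_gt0.
have : ((\esum_(t in [set: nat]) (g ^+ t)%:E) <= ((1 - g)^-1)%R%:E)%E.
  rewrite -nneseries_esumT; last by move=> n; rewrite lee_fin exprn_ge0.
  apply: lime_le; first by apply: is_cvg_nneseries => n _ _; rewrite lee_fin exprn_ge0.
  apply: nearW => n; rewrite sumEFin lee_fin big_mkord.
  rewrite -[X in (_ <= X)%R]div1r ler_pdivlMr //.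
  have := subrX1 g n; rewrite mulrC => h.
  have -> : ((\sum_(i < n) g ^+ i) * (1 - g) = 1 - g ^+ n)%R.
    by rewrite -opprB mulrN -h opprB.
  by rewrite lerBlDr lerDl exprn_ge0.
move=> /(lee_wpmul2l (x := (1 - g)%R%:E)); rewrite lee_fin ltW // => /(_ erefl).
by rewrite -EFinM mulfV ?gt_eqF.
Qed.

End Gen.
Arguments esumZ_le {R T} D c f.
Arguments esum_sub_le {R T} D1 D2 f.
Arguments geo_esum {R g}.

Section MDP.
Variables (R : realType) (S A : choiceType) (I : S -> A -> Prop)
  (P : S -> A -> S -> R) (d0 : S -> R) (gamma : R).
Hypothesis HP : forall s a, is_distr (P s a).
Hypothesis Hd0 : is_distr d0.
Hypothesis Hg : (0 <= gamma < 1)%R.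
Local Open Scope ereal_scope.

Lemma P_ge0 s a s' : (0 <= P s a s')%R. Proof. exact: (HP s a).1. Qed.

Lemma occ_ge0 pi : (forall s a, 0 <= pi s a)%R ->
  forall t s a, 0 <= occ I P d0 pi t s a.
Proof.
move=> pi0; elim=> [|t IH] s a /=.
  by rewrite lee_fin mulr_ge0 // (Hd0.1).
apply: mule_ge0; last by rewrite lee_fin.
by apply: esum_ge0 => p _; apply: mule_ge0 => //; rewrite lee_fin P_ge0.
Qed.

Lemma occ_mono pi pi2 : (forall s a, 0 <= pi s a)%R -> (forall s a, 0 <= pi2 s a)%R ->
  (forall s a, ~ I s a -> pi s a <= pi2 s a)%R ->
  forall t s a, ~ I s a -> occ I P d0 pi t s a <= occ I P d0 pi2 t s a.
Proof.
move=> pi0 pi20 le12; elim=> [|t IH] s a nI /=.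
  by rewrite lee_fin ler_wpM2l // ?(Hd0.1) // le12.
apply: lee_pmul.
- by apply: esum_ge0 => p _; apply: mule_ge0; [exact: occ_ge0|rewrite lee_fin P_ge0].
- by rewrite lee_fin.
- apply: le_esum => p /= np; apply: lee_wpmul2r; first by rewrite lee_fin P_ge0.
  exact: IH.
- by rewrite lee_fin le12.
Qed.

Lemma occ_zero pi2 : (forall s a, I s a -> pi2 s a = 0%R) ->
  forall t s a, I s a -> occ I P d0 pi2 t s a = 0.
Proof. by move=> z [|t] s a Ia /=; rewrite z // ?mulr0 ?mule0. Qed.

Lemma dtil_ge0 pi : (forall s a, 0 <= pi s a)%R ->
  forall s a, 0 <= dtil I P d0 gamma pi s a.
Proof.
move=> pi0 s a; case/andP: Hg => g0 g1; apply: mule_ge0.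
  by rewrite lee_fin subr_ge0 ltW.
apply: esum_ge0 => t _; apply: mule_ge0; first by rewrite lee_fin exprn_ge0.
exact: occ_ge0.
Qed.

Lemma dtil_mono pi pi2 : (forall s a, 0 <= pi s a)%R -> (forall s a, 0 <= pi2 s a)%R ->
  (forall s a, ~ I s a -> pi s a <= pi2 s a)%R ->
  forall s a, ~ I s a -> dtil I P d0 gamma pi s a <= dtil I P d0 gamma pi2 s a.
Proof.
move=> pi0 pi20 le12 s a nI; case/andP: Hg => g0 g1.
apply: lee_wpmul2l; first by rewrite lee_fin subr_ge0 ltW.
apply: le_esum => t _; apply: lee_wpmul2l; first by rewrite lee_fin exprn_ge0.
exact: occ_mono.
Qed.

Lemma dtil_zero pi2 : (forall s a, I s a -> pi2 s a = 0%R) ->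
  forall s a, I s a -> dtil I P d0 gamma pi2 s a = 0.
Proof.
move=> z s a Ia; rewrite /dtil esum1 ?mule0 // => t _.
by rewrite occ_zero // mule0.
Qed.

Lemma occ_total pi : is_policy pi -> forall t,
  \esum_(p in [set: S * A]) occ I P d0 pi t p.1 p.2 <= 1.
Proof.
move=> Hpi; have pi0 : forall s a, (0 <= pi s a)%R by move=> s a; exact: (Hpi s).1.
elim=> [|t IH].
  rewrite esum_pairT; last by move=> p; exact: occ_ge0.
  rewrite -(Hd0.2); apply: le_esum => s _ /=.
  under eq_esum do rewrite EFinM.
  apply: (le_trans (esumZ_le _ _ _ _ _)); first by rewrite lee_fin (Hd0.1).
    by move=> a; rewrite lee_fin.
  by rewrite (Hpi s).2 mule1.
rewrite esum_pairT; last by move=> p; exact: occ_ge0.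
apply: le_trans IH => /=.
set B := fun s => \esum_(p in [set p : S * A | ~ I p.1 p.2])
   (occ I P d0 pi t p.1 p.2 * (P p.1 p.2 s)%:E).
have B0 : forall s, 0 <= B s.
  by move=> s; apply: esum_ge0 => p _; apply: mule_ge0; [exact: occ_ge0|rewrite lee_fin P_ge0].
apply: (le_trans (y := \esum_(s in [set: S]) B s)).
  apply: le_esum => s _.
  apply: (le_trans (esumZ_le _ _ _ _ _)); [exact: B0|by move=> a; rewrite lee_fin|].
  by rewrite (Hpi s).2 mule1.
rewrite /B esum_swap; last first.
  by move=> s p; apply: mule_ge0; [exact: occ_ge0|rewrite lee_fin P_ge0].
apply: (le_trans (y := \esum_(p in [set p : S * A | ~ I p.1 p.2]) occ I P d0 pi t p.1 p.2)).
  apply: le_esum => p _.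
  apply: (le_trans (esumZ_le _ _ _ _ _)); first exact: occ_ge0.
    by move=> s; rewrite lee_fin P_ge0.
  by rewrite (HP _ _).2 mule1.
apply: esum_sub_le => //; move=> p; exact: occ_ge0.
Qed.

Lemma dtil_total pi : is_policy pi ->
  \esum_(p in [set: S * A]) dtil I P d0 gamma pi p.1 p.2 <= 1.
Proof.
move=> Hpi; have pi0 : forall s a, (0 <= pi s a)%R by move=> s a; exact: (Hpi s).1.
case/andP: Hg => g0 g1.
have c0 : 0 <= (1 - gamma)%R%:E by rewrite lee_fin subr_ge0 ltW.
rewrite /dtil; apply: (le_trans (esumZ_le _ _ _ _ _)) => //.
  move=> p; apply: esum_ge0 => t _; apply: mule_ge0; first by rewrite lee_fin exprn_ge0.
  exact: occ_ge0.
apply: le_trans (geo_esum Hg); apply: lee_wpmul2l => //.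
rewrite esum_swap; last first.
  by move=> p t; apply: mule_ge0; [rewrite lee_fin exprn_ge0|exact: occ_ge0].
apply: le_esum => t _.
apply: (le_trans (esumZ_le _ _ _ _ _)); first by rewrite lee_fin exprn_ge0.
  by move=> p; exact: occ_ge0.
rewrite -[X in _ <= X]mule1; apply: lee_wpmul2l; first by rewrite lee_fin exprn_ge0.
exact: occ_total.
Qed.

End MDP.
Arguments dtil_ge0 {R S A I P d0 gamma}.
Arguments dtil_mono {R S A I P d0 gamma}.
Arguments dtil_zero {R S A I P d0 gamma pi2}.
Arguments dtil_total {R S A I P d0 gamma}.

Lemma fix_policy (R : realType) (S A : choiceType) (I : S -> A -> Prop)
  (pi : S -> A -> R) : partial_set I -> is_policy pi ->
  exists pi2, is_policy pi2 /\ (forall s a, ~ I s a -> pi s a <= pi2 s a) /\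
    (forall s a, I s a -> pi2 s a = 0).
Proof.
move=> Hpart Hpi.
have pi0 : forall s a, 0 <= pi s a by move=> s a; exact: (Hpi s).1.
have ex0 : forall s, exists a, ~ I s a.
  move=> s; have [//|nex] := pselect (exists a, ~ I s a).
  have Hall : forall a, I s a.
    by move=> a; apply: contrapT => Ha; apply: nex; exists a.
  have [a _] : exists a : A, True.
    apply: contrapT => ne; have := (Hpi s).2.
    rewrite esum1 // => [h|i _]; last by exfalso; apply: ne; exists i.
    by move: h => -[] /eqP; rewrite eq_sym oner_eq0.
  by have [a' Ha'] := Hpart s a (Hall a); exfalso; apply: Ha'.
have [a0 Ha0] := choice ex0.
pose m s := fine (\esum_(a in [set a | I s a]) (pi s a)%:E).
have mfin : forall s, (\esum_(a in [set a | I s a]) (pi s a)%:E) \is a fin_num.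
  move=> s; rewrite ge0_fin_numE; last by apply: esum_ge0 => a _; rewrite lee_fin.
  apply: (le_lt_trans (y := 1%E)); last exact: ltry.
  rewrite -(Hpi s).2; apply: esum_sub_le => // a; by rewrite lee_fin.
have m0 : forall s, 0 <= m s.
  by move=> s; apply: fine_ge0; apply: esum_ge0 => a _; rewrite lee_fin.
exists (fun s a => (if `[< I s a >] then 0 else pi s a) + (if a == a0 s then m s else 0)).
split; [|split].
- move=> s; split.
    move=> a; apply: addr_ge0; first by case: ifP.
    by case: ifP.
  under eq_esum do rewrite EFinD.
  rewrite esumD; first last.
  + by move=> a _; case: ifP => _ //; rewrite lee_fin.
  + by move=> a _; case: ifP => _ //; rewrite lee_fin.
  have -> : \esum_(i in [set: A]) ((if i == a0 s then m s else 0)%:E) = (m s)%:E.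
    rewrite -[RHS](@esum_point _ _ (a0 s) (m s)%:E); last by rewrite lee_fin.
    by apply: eq_esum => a _; case: ifP.
  rewrite (eq_esum (I := [set: A]) (b := fun a => if a \in ~` [set a | I s a] then (pi s a)%:E else 0%E)); last first.
    move=> a _; case: (asboolP (I s a)) => h /=.
      by rewrite ifF //; apply/negbTE; rewrite in_setC negbK; exact: mem_set.
    by rewrite ifT // in_setC; apply/negP => /set_mem.
  rewrite -esum_mkcondr /m fineK // -(Hpi s).2 (esumID [set a | I s a] [set: A]); last first.
    by move=> a _; rewrite lee_fin.
  by rewrite !setTI addeC.
- move=> s a nI; rewrite asboolF // lerDl.
  by case: ifP.
- move=> s a Ia; rewrite asboolT // add0r.
  case: eqP => // e; exfalso; apply: (Ha0 s); by rewrite -e.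
Qed.
Arguments fix_policy {R S A I pi}.

Theorem mainTheorem16 (R : realType) (S A : choiceType)
  (P : S -> A -> S -> R) (r : S -> A -> R) (gamma : R) (d0 : S -> R)
  (s_tri s_circ : S)
  (Qbar : S -> A -> R) (mu : S -> A -> R) (eta : R) (Rt : R) :
  (* MDP *)
  (forall s a, is_distr (P s a)) ->
  (forall s a, 0 <= r s a <= 1) ->
  0 <= gamma < 1 ->
  is_distr d0 ->
  (* unsafe states *)
  s_tri <> s_circ ->
  (forall a s', P s_tri a s' = if s' == s_circ then 1 else 0) ->
  (forall a s', P s_circ a s' = if s' == s_circ then 1 else 0) ->
  (forall a, r s_tri a = 0) -> (forall a, r s_circ a = 0) ->
  (* intervention rule *)
  is_policy mu ->
  0 <= eta <= 1 ->
  (forall s a, safe s_tri s_circ s -> 0 <= Qbar s a <= 1) ->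
  (* hypotheses of the theorem *)
  Rt <= 0 ->
  partial_set (interv s_tri s_circ Qbar mu eta) ->
  let I := interv s_tri s_circ Qbar mu eta in
  (* (1) *)
  (forall pi, is_policy pi ->
     (Jplus s_tri s_circ I P d0 r gamma pi <= Vstar I P d0 r Rt gamma)%E) /\
  (* (2) *)
  ((exists pi, optimal I P d0 r Rt gamma pi) ->
     exists pi, optimal I P d0 r Rt gamma pi /\ interv_mass I P d0 gamma pi = 0%E) /\
  (* (3) *)
  (Rt < 0 ->
     forall pi, optimal I P d0 r Rt gamma pi -> interv_mass I P d0 gamma pi = 0%E).
Proof.
move=> HP Hr Hg Hd0 _ _ _ _ _ _ _ _ HRt Hpart I.
have HpartI : partial_set I by exact: Hpart.
clearbody I; clear Hpart.
have r0 s a : 0 <= r s a by case/andP: (Hr s a).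
have r1 s a : r s a <= 1 by case/andP: (Hr s a).
case/andP: (Hg) => g0 g1.
have cpos : 0 < (1 - gamma)^-1 by rewrite invr_gt0 subr_gt0.
set c := ((1 - gamma)^-1)%:E.
have c0 : (0 <= c)%E by rewrite lee_fin ltW.
pose X pi := \esum_(p in [set: S * A])
   (dtil I P d0 gamma pi p.1 p.2 * (Num.max (rtil I r Rt p.1 p.2) 0)%:E)%E.
pose Y pi := \esum_(p in [set: S * A])
   (dtil I P d0 gamma pi p.1 p.2 * (Num.max (- rtil I r Rt p.1 p.2) 0)%:E)%E.
have VtilE pi : Vtil I P d0 r Rt gamma pi = (c * (X pi - Y pi))%E by [].
have pol0 (pi : S -> A -> R) : is_policy pi -> forall s a, 0 <= pi s a.
  by move=> Hpi s a; exact: (Hpi s).1.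
have X0 pi : is_policy pi -> (0 <= X pi)%E.
  move=> Hpi; apply: esum_ge0 => p _; apply: mule_ge0.
    exact: (dtil_ge0 (I:=I) HP Hd0 Hg _ (pol0 _ Hpi)).
  by rewrite lee_fin le_max lexx orbT.
have Y0 pi : is_policy pi -> (0 <= Y pi)%E.
  move=> Hpi; apply: esum_ge0 => p _; apply: mule_ge0.
    exact: (dtil_ge0 (I:=I) HP Hd0 Hg _ (pol0 _ Hpi)).
  by rewrite lee_fin le_max lexx orbT.
have key pi : is_policy pi -> exists pi2, is_policy pi2 /\
    Vtil I P d0 r Rt gamma pi2 = (c * X pi2)%E /\ (X pi <= X pi2)%E /\
    interv_mass I P d0 gamma pi2 = 0%E.
  move=> Hpi; have [pi2 [Hpi2 [le12 z2]]] := fix_policy HpartI Hpi.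
  exists pi2; split => //; split; [|split].
  - rewrite VtilE; suff -> : Y pi2 = 0%E by rewrite sube0.
    apply: esum1 => p _; have [Ip|nIp] := pselect (I p.1 p.2).
      by rewrite (dtil_zero z2) // mul0e.
    by rewrite /rtil asboolF // max_r ?mule0 // oppr_le0.
  - apply: le_esum => p _; have [Ip|nIp] := pselect (I p.1 p.2).
      by rewrite /rtil asboolT // max_r // !mule0.
    apply: lee_wpmul2r; first by rewrite lee_fin le_max lexx orbT.
    exact: (dtil_mono (I:=I) HP Hd0 Hg _ _ (pol0 _ Hpi) (pol0 _ Hpi2)).
  - by apply: esum1 => p Ip; apply: (dtil_zero z2).
have Vle pi : is_policy pi -> (Vtil I P d0 r Rt gamma pi <= Vstar I P d0 r Rt gamma)%E.
  by move=> Hpi; apply: ereal_sup_ubound; exists pi.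
have XY pi : is_policy pi -> (Vtil I P d0 r Rt gamma pi <= c * X pi)%E.
  move=> Hpi; rewrite VtilE; apply: lee_wpmul2l => //.
  rewrite -[X in (_ <= X)%E]sube0; apply: leeB => //; exact: Y0.
split; [|split].
- move=> pi Hpi; have [pi2 [Hpi2 [V2 [le2 _]]]] := key pi Hpi.
  apply: (le_trans _ (Vle _ Hpi2)); rewrite V2 /Jplus; apply: lee_wpmul2l => //.
  apply: le_trans le2.
  apply: (le_trans (y := \esum_(p in [set p : S * A | safe s_tri s_circ p.1 /\ ~ I p.1 p.2])
     (dtil I P d0 gamma pi p.1 p.2 * (Num.max (rtil I r Rt p.1 p.2) 0)%:E)%E)).
    by apply: le_esum => p [_ nIp]; rewrite /rtil asboolF // max_l.
  apply: esum_sub_le => // p; apply: mule_ge0.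
    exact: (dtil_ge0 (I:=I) HP Hd0 Hg _ (pol0 _ Hpi)).
  by rewrite lee_fin le_max lexx orbT.
- move=> [pi [Hpi Vopt]]; have [pi2 [Hpi2 [V2 [le2 z2]]]] := key pi Hpi.
  exists pi2; split => //; split => //.
  apply/le_anti/andP; split; first exact: Vle.
  rewrite -Vopt V2; apply: le_trans (XY pi Hpi) _; exact: lee_wpmul2l.
- move=> Rtneg pi [Hpi Vopt]; have [pi2 [Hpi2 [V2 [le2 z2]]]] := key pi Hpi.
  have h : (c * X pi <= c * (X pi - Y pi))%E.
    rewrite -VtilE Vopt; apply: le_trans (Vle _ Hpi2); rewrite V2.
    exact: lee_wpmul2l.
  rewrite lee_pmul2l // ?lte_fin // in h.
  have Xfin : X pi \is a fin_num.
    rewrite ge0_fin_numE; last exact: X0.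
    apply: (le_lt_trans (y := 1%E)); last exact: ltry.
    apply: le_trans (dtil_total (I:=I) HP Hd0 Hg _ Hpi).
    apply: le_esum => p _; rewrite -[X in (_ <= X)%E]mule1.
    apply: lee_wpmul2l; first exact: (dtil_ge0 (I:=I) HP Hd0 Hg _ (pol0 _ Hpi)).
    rewrite lee_fin ge_max ler01 andbT /rtil; case: asboolP => _ //.
    exact: le_trans HRt ler01.
  have Yz : Y pi = 0%E.
    move: h Xfin (Y0 _ Hpi); case: (X pi) => // x; case: (Y pi) => [y| |] h _ y0.
    - apply/eqP; rewrite eq_le y0 andbT; move: h y0.
      rewrite -EFinB !lee_fin => h y0; lra.
    - by move: h; rewrite /= leeNy_eq.
    - by move: y0; rewrite leeNy_eq.
  apply/eqP; rewrite eq_le; apply/andP; split; last first.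
    apply: esum_ge0 => p _; exact: (dtil_ge0 (I:=I) HP Hd0 Hg _ (pol0 _ Hpi)).
  have Rp : 0 < - Rt by rewrite oppr_gt0.
  rewrite /interv_mass.
  rewrite (eq_esum (b := fun p => ((- Rt)^-1%:E * (dtil I P d0 gamma pi p.1 p.2 * (- Rt)%:E))%E)); last first.
    by move=> p _; rewrite muleCA -EFinM mulVf ?gt_eqF // mule1.
  apply: (le_trans (esumZ_le _ _ _ _ _)).
  - by rewrite lee_fin ltW // invr_gt0.
  - by move=> p; apply: mule_ge0; [exact: (dtil_ge0 (I:=I) HP Hd0 Hg _ (pol0 _ Hpi))|rewrite lee_fin ltW].
  rewrite -[X in (_ <= X)%E](mule0 ((- Rt)^-1)%:E) -Yz.
  apply: lee_wpmul2l; first by rewrite lee_fin ltW // invr_gt0.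
  apply: (le_trans (y := \esum_(p in [set p : S * A | I p.1 p.2])
     (dtil I P d0 gamma pi p.1 p.2 * (Num.max (- rtil I r Rt p.1 p.2) 0)%:E)%E)).
    by apply: le_esum => p Ip; rewrite /rtil asboolT // max_l // ltW.
  apply: esum_sub_le => // p; apply: mule_ge0.
    exact: (dtil_ge0 (I:=I) HP Hd0 Hg _ (pol0 _ Hpi)).
  by rewrite lee_fin le_max lexx orbT.
Qed.
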